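(* Let $D$ be a dataset, $\Omega=\{\omega_1,\dots,\omega_k\}$ a finite set of outcomes, $q$ a real-valued quality function with sensitivity $\Delta>0$, and $\varepsilon>0$; let $q_*=\max_i q(D,\omega_i)$. Then the output distributions of Intermediate Algorithm A and Intermediate Algorithm B (defined below) on these inputs are the same.
   Context: $\mathrm{Expo}(\lambda)$ denotes the exponential distribution with rate $\lambda$, density $\lambda e^{-\lambda x}\mathbf{1}[x\ge0]$. Intermediate Algorithm A: compute $q_*$; for each $i=1,\dots,k$ independently set $v_i=q(D,\omega_i)+X_i$ with $X_i\sim\mathrm{Expo}(\varepsilon/(2\Delta))$; let $S=\{i: v_i\ge q_*\}$; return an element of $S$ chosen uniformly at random. Intermediate Algorithm B: compute $q_*$; for each $i=1,\dots,k$ independently set $v_i^\top=\min\{q_*,\,q(D,\omega_i)+X_i\}$ with $X_i\sim\mathrm{Expo}(\varepsilon/(2\Delta))$ and draw $z_i\sim\mathrm{Expo}(\varepsilon/(2\Delta))$ (all these random variables independent); let $S'=\{i: v_i^\top=q_*\}$; return $\arg\max_{i\in S'}(v_i^\top+z_i)$ (ties occur with probability zero). *)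

(* Defs.v *)
From HB Require Import structures.
From mathcomp Require Import all_boot all_order all_algebra.
From mathcomp Require Import all_classical all_reals all_analysis.
Set Implicit Arguments. Unset Strict Implicit. Unset Printing Implicit Defensive.
Import Order.TTheory GRing.Theory Num.Theory.
Local Open Scope ring_scope.

(* Expectation of F(X_0,...,X_{n-1}) where X_0,...,X_{n-1} are i.i.d.
   Expo(rate), written as iterated Lebesgue integrals against the density
   exponential_pdf rate x = rate * exp(-rate x) 1[x >= 0]  (library).
   Noise vectors are represented as functions nat -> R (only the first n
   coordinates matter). *)
Fixpoint expo_expect {R : realType} (rate : R) (n : nat)
  (F : (nat -> R) -> \bar R) : \bar R :=
  match n with
  | 0 => F (fun _ => 0)
  | n'.+1 => (\int[lebesgue_measure]_x
        ((exponential_pdf rate x)%:E *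
          expo_expect rate n' (fun g => F (fun j => if j == n' then x else g j))))%E
  end.

Definition has_sensitivity {Data Out : Type} {R : realType}
  (nbr : Data -> Data -> Prop) (q : Data -> Out -> R) (Delta : R) : Prop :=
  forall D D' w, nbr D D' -> `|q D w - q D' w| <= Delta.

Definition is_max_quality {R : realType} {k : nat} (qv : 'I_k -> R) (qs : R) :=
  (forall i, qv i <= qs) /\ (exists i, qv i = qs).

Definition algA_prob {R : realType} {k : nat} (lam : R) (qv : 'I_k -> R)
  (qs : R) (i : 'I_k) : \bar R :=
  expo_expect lam k (fun X =>
    let S := [set j : 'I_k | qs <= qv j + X (val j)] in
    if i \in S then ((#|S|%:R)^-1)%:E else 0%E).

(* Probability that Intermediate Algorithm B outputs index i:
   vT_j = min(q_*, q_j + X_j), S' = {j : vT_j = q_*}, output the argmax over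
   S' of vT_j + z_j (ties, a null event, broken towards the smallest index). *)
Definition algB_prob {R : realType} {k : nat} (lam : R) (qv : 'I_k -> R)
  (qs : R) (i : 'I_k) : \bar R :=
  expo_expect lam k (fun X => expo_expect lam k (fun Z =>
    let vT := fun j : 'I_k => Num.min qs (qv j + X (val j)) in
    let inS' := fun j : 'I_k => vT j == qs in
    let sc := fun j : 'I_k => vT j + Z (val j) in
    if inS' i && [forall j, inS' j ==>
          ((sc j < sc i) || ((sc j == sc i) && (i <= j)%N))]
    then 1%E else 0%E)).

(* Main.v *)
Require Import Defs.
From HB Require Import structures.
From mathcomp Require Import all_boot all_order all_algebra.
From mathcomp Require Import all_classical all_reals all_analysis.
From mathcomp Require Import measurable_realfun.
From mathcomp Require Import ring lra.
Import Order.TTheory GRing.Theory Num.Theory.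
Import numFieldTopology.Exports.

Local Open Scope classical_set_scope.
Local Open Scope ring_scope.

Definition pf {R : realType} (lam : R) (x : R) : R := 1 - expR (- lam * x).

Lemma is_derive_pf {R : realType} (lam x : R) :
  is_derive x 1 (pf lam) (lam * expR (- lam * x)).
Proof.
have h1 : is_derive x 1 (fun y : R => - lam * y) (- lam).
  have := is_deriveZ (-lam) (is_derive_id x (1:R)).
  by rewrite /GRing.scale /= mulr1.
have h2 := is_derive1_comp (is_derive_expR (- lam * x)) h1.
have h3 := is_deriveB (is_derive_cst (1:R) x 1) h2.
rewrite (_ : pf lam = cst 1 - (expR \o (fun y : R => - lam * y))); last first.
  by apply/funext => y.
refine (is_derive_eq h3 _).
by rewrite /= sub0r mulrN opprK mulrC.
Qed.

Lemma continuous_pf {R : realType} (lam : R) : continuous (pf lam).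
Proof.
move=> x; have h := is_derive_pf lam x.
apply: differentiable_continuous; apply/derivable1_diffP.
by case: h.
Qed.

Lemma pf_ge0 {R : realType} (lam x : R) : 0 <= lam -> 0 <= x -> 0 <= pf lam x.
Proof.
move=> l0 x0; rewrite /pf subr_ge0.
by rewrite expR_le1 mulNr oppr_le0 mulr_ge0.
Qed.

Lemma pf_le1 {R : realType} (lam x : R) : pf lam x <= 1.
Proof. by rewrite /pf lerBlDr lerDl expR_ge0. Qed.

Lemma expR_pf {R : realType} (lam x : R) : expR (- lam * x) = 1 - pf lam x.
Proof. by rewrite /pf opprB addrC subrK. Qed.

Lemma pf_cvg1 {R : realType} (lam : R) : 0 < lam ->
  pf lam x @[x --> +oo] --> (1:R).
Proof.
move=> rate0; rewrite /pf -[X in _ --> X]subr0; apply: cvgB; first exact: cvg_cst.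
rewrite (_ : (fun x => expR (- lam * x)) =
             (fun z => expR (- z)) \o (fun z => lam * z)); last first.
  by apply: eq_fun => x; rewrite mulNr.
apply: (@cvg_comp _ _ _ _ _ _ (pinfty_nbhs R)); last exact: cvgr_expR.
exact: gt0_cvgMry.
Qed.

Lemma ftc_pf {R : realType} (lam T : R) (Phi phi : R -> R) :
  0 < lam -> 0 <= T ->
  (forall u : R, is_derive u (1:R) Phi (phi u)) -> continuous phi ->
  (forall u, 0 <= u <= 1 -> 0 <= phi u) ->
  (\int[lebesgue_measure]_(x in `[T, +oo[)
     ((exponential_pdf lam x) * phi (pf lam x))%:E
   = (Phi 1 - Phi (pf lam T))%:E)%E.
Proof.
move=> l0 T0 dPhi cphi phi0.
have cPhi : continuous Phi.
  move=> u; apply: differentiable_continuous; apply/derivable1_diffP.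
  by case: (dPhi u).
pose f x := phi (pf lam x) * (lam * (1 - pf lam x)).
transitivity (\int[lebesgue_measure]_(x in `[T, +oo[) (f x)%:E)%E.
  apply: eq_integral => x; rewrite inE /= in_itv /= andbT => Tx.
  rewrite exponential_pdfE ?(le_trans T0)// /f -expR_pf mulrC //.
rewrite EFinB.
apply: (@ge0_continuous_FTC2y _ f (Phi \o pf lam)).
- move=> x Tx; rewrite /f; have x0 : 0 <= x by exact: le_trans Tx.
  apply: mulr_ge0; first by apply: phi0; rewrite pf_le1 pf_ge0 ?(ltW l0).
  by apply: mulr_ge0; rewrite ?(ltW l0)// subr_ge0 pf_le1.
- apply: continuous_subspaceT => x.
  have -> : f = (phi \o pf lam) \* ((cst lam) \* (cst 1 - pf lam)).
    by apply/funext => y.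
  apply: continuousM.
    exact: continuous_comp (continuous_pf lam x) (cphi _).
  apply: continuousM; first exact: cst_continuous.
  by apply: continuousB; [exact: cst_continuous| exact: continuous_pf].
- apply: continuous_cvg; first exact: cPhi.
  exact: pf_cvg1.
- move=> x _; have := is_derive1_comp (dPhi (pf lam x)) (is_derive_pf lam x).
  by case.
- apply: cvg_at_right_filter.
  exact: continuous_comp (continuous_pf lam T) (cPhi _).
- move=> x _; rewrite derive1E.
  have := is_derive1_comp (dPhi (pf lam x)) (is_derive_pf lam x).
  move=> H; rewrite derive_val.
  by rewrite /f expR_pf.
Qed.


Local Notation mu := lebesgue_measure.

Lemma mpdf {R : realType} (lam : R) : measurable_fun [set: R] (EFin \o exponential_pdf lam).
Proof. by apply/measurable_EFinP; exact: measurable_exponential_pdf. Qed.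

Lemma pdf_ge0 {R : realType} (lam x : R) : 0 < lam -> 0 <= exponential_pdf lam x.
Proof. by move=> l0; apply: exponential_pdf_ge0; exact: ltW. Qed.

Lemma int_ray {R : realType} (lam T : R) : 0 < lam -> 0 <= T ->
  (\int[mu]_(x in `[T, +oo[) (exponential_pdf lam x)%:E = (1 - pf lam T)%:E)%E.
Proof.
move=> l0 T0.
have := @ftc_pf R lam T id (cst 1) l0 T0 (fun u => is_derive_id u (1:R)) (@cst_continuous R R (1:R))
  (fun _ _ => ler01).
under eq_integral do rewrite /= mulr1.
by [].
Qed.

Lemma setT_split {R : realType} (T : R) :
  [set: R] = `]-oo, T[ `|` `[T, +oo[.
Proof.
apply/seteqP; split => x //= _.
by case: (ltP x T) => h; [left|right]; rewrite /= in_itv /= ?h ?andbT.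
Qed.

Lemma int_left {R : realType} (lam T : R) : 0 < lam -> 0 <= T ->
  (\int[mu]_(x in `]-oo, T[) (exponential_pdf lam x)%:E = (pf lam T)%:E)%E.
Proof.
move=> l0 T0.
have := integral_exponential_pdf l0.
rewrite (setT_split T) ge0_integral_setU//=; last 3 first.
- by rewrite -setT_split; exact: mpdf.
- by move=> x _; rewrite lee_fin pdf_ge0.
- apply/disj_setPS => x [] /=; rewrite !in_itv /= andbT => h1 h2.
  by move: (lt_le_trans h1 h2); rewrite ltxx.
rewrite int_ray//.
move/(congr1 (fun z => z - (1 - pf lam T)%:E)%E).
rewrite addeK // => ->.
by rewrite -EFinB opprB addrC subrK.
Qed.

Lemma int_const {R : realType} (lam r : R) : 0 < lam -> 0 <= r ->
  (\int[mu]_x ((exponential_pdf lam x)%:E * r%:E) = r%:E)%E.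
Proof.
move=> l0 r0.
rewrite ge0_integralZr//; first by rewrite integral_exponential_pdf// mul1e.
- exact: mpdf.
- by move=> x _; rewrite lee_fin pdf_ge0.
Qed.

Lemma int_zero {R : realType} (lam : R) :
  (\int[mu]_x ((exponential_pdf lam x)%:E * 0) = 0)%E.
Proof.
under eq_integral do rewrite mule0.
exact: integral0.
Qed.

Definition pp {R : realType} (lam c : R) := pf lam (Num.max c 0).

Lemma int_lt {R : realType} (lam c r : R) : 0 < lam -> 0 <= r ->
  (\int[mu]_x ((exponential_pdf lam x)%:E * (if x < c then r else 0)%:E)
   = (r * pp lam c)%:E)%E.
Proof.
move=> l0 r0.
case: (leP c 0) => c0.
  rewrite /pp max_r// /pf mulr0 expR0 subrr mulr0.
  under eq_integral => x _.
    case: ifPn => xc; last by rewrite mule0; over.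
    by rewrite lt0_exponential_pdf ?mul0e ?(lt_le_trans xc)//; over.
  exact: integral0.
transitivity (\int[mu]_(x in `]-oo, c[) ((exponential_pdf lam x)%:E * r%:E))%E.
  rewrite [RHS]integral_mkcond; apply: eq_integral => x _.
  rewrite patchE mem_setE in_itv /=.
  by case: ifPn => //; rewrite mule0.
rewrite ge0_integralZr//=.
- by rewrite int_left ?(ltW c0)// /pp max_l ?(ltW c0)// -EFinM mulrC.
- exact: measurable_funTS (mpdf lam).
- by move=> x _; rewrite lee_fin pdf_ge0.
Qed.

Lemma is_derive_ext {R : realType} (x : R) (f g : R -> R) (df dg : R) :
  is_derive x (1:R) f df -> f = g -> df = dg -> is_derive x (1:R) g dg.
Proof. by move=> h <- <-. Qed.

Lemma is_derive_powdiv {R : realType} (u : R) (a : nat) :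
  is_derive u (1:R) (fun v : R => v ^+ a.+1 / a.+1%:R) (u ^+ a).
Proof.
have h := is_deriveZ (a.+1%:R^-1 : R) (is_deriveX a.+1 (is_derive_id u (1:R))).
refine (@is_derive_ext _ _ _ _ _ _ h _ _).
  by apply/funext => v; rewrite /= exprfctE /= [in RHS]mulrC.
by rewrite scalerA mulrA mulVf ?pnatr_eq0// mul1r; exact: mulr1.
Qed.

Lemma int_ge {R : realType} (lam T : R) (a : nat) : 0 < lam -> 0 <= T ->
  (\int[mu]_x ((exponential_pdf lam x)%:E * (if T <= x then pf lam x ^+ a else 0)%:E)
   = ((1 - pf lam T ^+ a.+1) / a.+1%:R)%:E)%E.
Proof.
move=> l0 T0.
transitivity (\int[mu]_(x in `[T, +oo[) ((exponential_pdf lam x) * pf lam x ^+ a)%:E)%E.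
  rewrite [RHS]integral_mkcond; apply: eq_integral => x _.
  rewrite patchE mem_setE in_itv /= andbT.
  by case: ifPn => //; rewrite mule0.
have phi0 : forall u : R, 0 <= u <= 1 -> 0 <= u ^+ a.
  by move=> u /andP[u0 _]; exact: exprn_ge0.
rewrite (@ftc_pf R lam T (fun v => v ^+ a.+1 / a.+1%:R) (fun v => v ^+ a) l0 T0
  (fun u => is_derive_powdiv u a) (@exprn_continuous R a) phi0).
by rewrite expr1n mulrBl.
Qed.

Lemma cont_phiM {R : realType} (b : nat) : continuous (fun u : R => (1 - u ^+ b) / b%:R).
Proof.
move=> u.
have -> : (fun u : R => (1 - u ^+ b) / b%:R) = (cst 1 - (@GRing.exp R ^~ b)) \* cst (b%:R^-1).
  by apply/funext => v.
apply: continuousM; last exact: cst_continuous.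
by apply: continuousB; [exact: cst_continuous | exact: exprn_continuous].
Qed.

Lemma is_derive_PhiM {R : realType} (u : R) (b : nat) :
  is_derive u (1:R) (fun v : R => (v - v ^+ b.+1 / b.+1%:R) / b%:R) ((1 - u ^+ b) / b%:R).
Proof.
have h1 := is_deriveB (is_derive_id u (1:R)) (is_derive_powdiv u b).
have h := is_deriveZ (b%:R^-1 : R) h1.
refine (@is_derive_ext _ _ _ _ _ _ h _ _).
  by apply/funext => v; rewrite /= /GRing.scale /= mulrC.
by rewrite /GRing.scale /= mulrC.
Qed.

Lemma int_max {R : realType} (lam T : R) (b : nat) : 0 < lam -> 0 <= T -> (0 < b)%N ->
  (\int[mu]_x ((exponential_pdf lam x)%:E * ((1 - pf lam (Num.max x T) ^+ b) / b%:R)%:E)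
   = ((1 - pf lam T ^+ b.+1) / b.+1%:R)%:E)%E.
Proof.
move=> l0 T0 b0.
set phi := fun u : R => (1 - u ^+ b) / b%:R.
have cg : continuous (fun x => phi (pf lam (Num.max x T))).
  have -> : (fun x => phi (pf lam (Num.max x T))) = phi \o (pf lam \o (id \max cst T)).
    by [].
  move=> x; apply: continuous_comp; last exact: cont_phiM.
  apply: continuous_comp; last exact: continuous_pf.
  by apply: continuous_max; [exact: cvg_id | exact: cst_continuous].
under eq_integral do rewrite -EFinM.
rewrite (setT_split T) ge0_integral_setU//=; last 3 first.
- rewrite -setT_split; apply/measurable_EFinP; apply: measurable_funM.
    exact: measurable_exponential_pdf.
  exact: continuous_measurable_fun.
- move=> x _; rewrite lee_fin mulr_ge0 ?pdf_ge0// /phi divr_ge0 // subr_ge0.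
  by apply: exprn_ile1; [apply: pf_ge0; rewrite ?(ltW l0)// le_max T0 orbT | exact: pf_le1].
- apply/disj_setPS => x [] /=; rewrite !in_itv /= andbT => h1 h2.
  by move: (lt_le_trans h1 h2); rewrite ltxx.
have phi0 : forall u : R, 0 <= u <= 1 -> 0 <= phi u.
  move=> u /andP[u0 u1]; rewrite /phi divr_ge0 // subr_ge0.
  exact: exprn_ile1.
have -> : (\int[mu]_(x in `[T, +oo[)
     (exponential_pdf lam x * ((1 - pf lam (Num.max x T) ^+ b) / b%:R))%:E
   = \int[mu]_(x in `[T, +oo[) (exponential_pdf lam x * phi (pf lam x))%:E)%E.
  apply: eq_integral => x; rewrite inE /= in_itv /= andbT => Tx.
  by rewrite max_l.
rewrite (@ftc_pf R lam T _ phi l0 T0 (fun u => is_derive_PhiM u b) (@cont_phiM R b) phi0).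
have -> : (\int[mu]_(x in `]-oo, T[)
     (exponential_pdf lam x * ((1 - pf lam (Num.max x T) ^+ b) / b%:R))%:E
   = \int[mu]_(x in `]-oo, T[) ((exponential_pdf lam x)%:E * (phi (pf lam T))%:E))%E.
  apply: eq_integral => x; rewrite inE /= in_itv /= => xT.
  by rewrite max_r ?(ltW xT)// EFinM.
rewrite ge0_integralZr//=; last 3 first.
- exact: measurable_funTS (mpdf lam).
- by move=> x _; rewrite lee_fin pdf_ge0.
- by rewrite lee_fin phi0 // pf_le1 pf_ge0 // ltW.
rewrite int_left// -EFinM -EFinD; congr EFin.
rewrite /phi expr1n -[b.+1]addn1 natrD exprD expr1.
have bn0 : (b%:R : R) != 0 by rewrite pnatr_eq0 -lt0n.
have bn1 : (b%:R + 1%:R : R) != 0 by rewrite -natrD pnatr_eq0 addn1.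
field.
by rewrite bn0 bn1.
Qed.

Definition mrg {R : realType} (n : nat) (g t : nat -> R) : nat -> R :=
  fun j => if (j < n)%N then g j else t j.
Definition upd {R : realType} (t : nat -> R) (n : nat) (x : R) : nat -> R :=
  fun j => if j == n then x else t j.

Lemma mrg0 {R : realType} (g t : nat -> R) : mrg 0 g t = t.
Proof. by apply/funext => j. Qed.

Lemma expo_mrg {R : realType} (lam : R) n (G : (nat -> R) -> \bar R) t :
  expo_expect lam n.+1 (fun g => G (mrg n.+1 g t)) =
  (\int[mu]_x ((exponential_pdf lam x)%:E *
      expo_expect lam n (fun g => G (mrg n g (upd t n x)))))%E.
Proof.
rewrite /=; apply: eq_integral => x _; congr (_ * _)%E.
congr (expo_expect _ _ _); apply/funext => g; congr G; apply/funext => j.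
by rewrite /mrg /upd ltnS; case: (ltngtP j n).
Qed.

Lemma expo_zero {R : realType} (lam : R) n :
  expo_expect lam n (fun _ => 0%E) = 0%E.
Proof.
elim: n => [|n IH] //=.
rewrite (_ : (fun g : nat -> R => 0%E) = (fun _ => 0%E)) // IH.
exact: int_zero.
Qed.

Definition cmpf {R : realType} (i j : nat) (y c : R) : bool :=
  (y < c) || ((y == c) && (i <= j)%N).
Definition condf {R : realType} (k i : nat) (P : nat -> bool) (Z : nat -> R) : bool :=
  all (fun j => P j ==> cmpf i j (Z j) (Z i)) (iota 0 k).
Definition Fc {R : realType} k i P := fun Z : nat -> R => if condf k i P Z then (1%E : \bar R) else 0%E.

Lemma iotaS' m n : iota m n.+1 = m :: iota m.+1 n.
Proof. by []. Qed.

Lemma count_iotaS (P : nat -> bool) n : count P (iota 0 n.+1) = (count P (iota 0 n) + P n)%N.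
Proof. by rewrite -addn1 iotaD count_cat /= addn0 add0n. Qed.

Lemma stage1 {R : realType} (lam : R) (k i : nat) (P : nat -> bool) :
  0 < lam -> (i < k)%N ->
  forall n, (n <= i)%N -> forall t : nat -> R,
  expo_expect lam n (fun g => Fc k i P (mrg n g t)) =
  (if all (fun j => P j ==> cmpf i j (t j) (t i)) (iota n (k - n))
   then pp lam (t i) ^+ count P (iota 0 n) else 0)%:E.
Proof.
move=> l0 ik; elim => [|n IH] ni t.
  rewrite /= mrg0 /Fc /condf subn0 /=.
  by case: ifPn.
rewrite expo_mrg.
have nk : (n < k)%N by apply: leq_trans ni (ltnW ik).
have nI : (n < i)%N by [].
under eq_integral => x _.
  rewrite IH ?(ltnW ni)//.
  have -> : upd t n x i = t i by rewrite /upd (gtn_eqF nI).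
  rewrite -(subnSK nk) iotaS' /=.
  rewrite (@eq_in_all _ _ (fun j => P j ==> cmpf i j (t j) (t i))); last first.
    move=> j; rewrite mem_iota => /andP[nj _].
    by rewrite /upd (gtn_eqF nj).
  have -> : upd t n x n = x by rewrite /upd eqxx.
  rewrite /cmpf (leqNgt i n) nI andbF orbF.
  over.
rewrite count_iotaS /cmpf.
set B := all _ (iota n.+1 _).
set r := pp lam (t i) ^+ count P (iota 0 n).
have r0 : 0 <= r by rewrite exprn_ge0 // pf_ge0 ?(ltW l0) // le_max lexx orbT.
case: (boolP B) => hB; last first.
  under eq_integral do rewrite andbF.
  exact: int_zero.
case: (boolP (P n)) => hP /=.
  under eq_integral do rewrite andbT.
  by rewrite int_lt // addn1 exprSr.
by rewrite int_const // addn0.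
Qed.

Definition Tm {R : realType} (k : nat) (P : nat -> bool) (n : nat) (t : nat -> R) : R :=
  \big[Num.max/0]_(j <- iota n (k - n) | P j) t j.

Lemma bigmax_ge0' {R : realType} (P : nat -> bool) (t : nat -> R) s :
  0 <= \big[Num.max/0]_(j <- s | P j) t j.
Proof.
elim: s => [|a s IH]; first by rewrite big_nil.
by rewrite big_cons; case: ifPn => // _; rewrite le_max IH orbT.
Qed.

Lemma bigmax_le' {R : realType} (P : nat -> bool) (t : nat -> R) s (x : R) : 0 <= x ->
  (\big[Num.max/0]_(j <- s | P j) t j <= x) = all (fun j => P j ==> (t j <= x)) s.
Proof.
move=> x0; elim: s => [|a s IH]; first by rewrite big_nil x0.
by rewrite big_cons /=; case: ifPn => _ //=; rewrite ge_max IH.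
Qed.

Lemma pf0 {R : realType} (lam : R) : pf lam 0 = 0.
Proof. by rewrite /pf mulr0 expR0 subrr. Qed.

Lemma TmS {R : realType} (k : nat) (P : nat -> bool) (n : nat) (t : nat -> R) x :
  (n < k)%N ->
  Tm k P n (upd t n x) = if P n then Num.max x (Tm k P n.+1 t) else Tm k P n.+1 t.
Proof.
move=> nk; rewrite /Tm -(subnSK nk) iotaS' big_cons {1}/upd eqxx.
have -> : \big[Num.max/0]_(j <- iota n.+1 (k - n.+1) | P j) upd t n x j =
          \big[Num.max/0]_(j <- iota n.+1 (k - n.+1) | P j) t j.
  rewrite big_seq_cond [RHS]big_seq_cond; apply: eq_bigr => j /andP[+ _].
  by rewrite mem_iota => /andP[nj _]; rewrite /upd (gtn_eqF nj).
by [].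
Qed.

Lemma count_pos (P : nat -> bool) i n : P i -> (i < n)%N -> (0 < count P (iota 0 n))%N.
Proof.
move=> Pi ilt; rewrite -has_count; apply/hasP; exists i => //.
by rewrite mem_iota add0n ilt.
Qed.

Lemma stage2 {R : realType} (lam : R) (k i : nat) (P : nat -> bool) :
  0 < lam -> (i < k)%N -> P i ->
  forall n, (i < n)%N -> (n <= k)%N -> forall t : nat -> R,
  expo_expect lam n (fun g => Fc k i P (mrg n g t)) =
  ((1 - pf lam (Tm k P n t) ^+ count P (iota 0 n)) / (count P (iota 0 n))%:R)%:E.
Proof.
move=> l0 ik Pi; elim => [//|n IH] iSn nk t.
rewrite expo_mrg.
move: iSn; rewrite ltnS leq_eqVlt => /orP[/eqP ein | inn].
  subst n.
  under eq_integral => x _.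
    rewrite (@stage1 R lam k i P l0 ik i (leqnn i)).
    rewrite -(subnSK ik) iotaS' /=.
    have -> : upd t i x i = x by rewrite /upd eqxx.
    have -> : cmpf i i x x = true by rewrite /cmpf eqxx leqnn orbT.
    rewrite implybT /=.
    rewrite (@eq_in_all _ _ (fun j => P j ==> (t j <= x))); last first.
      move=> j; rewrite mem_iota => /andP[ij _].
      by rewrite /upd (gtn_eqF ij) /cmpf (ltnW ij) andbT le_eqVlt orbC.
    over.
  transitivity (\int[mu]_x ((exponential_pdf lam x)%:E *
      (if Tm k P i.+1 t <= x then pf lam x ^+ count P (iota 0 i) else 0)%:E))%E.
    apply: eq_integral => x _.
    case: (ltP x 0) => x0.
      by rewrite lt0_exponential_pdf // !mul0e.
    by rewrite /Tm bigmax_le' // /pp max_l.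
  by rewrite int_ge // ?bigmax_ge0' // count_iotaS Pi addn1.
have c0 := @count_pos P i n Pi inn.
under eq_integral => x _.
  rewrite IH // ?(ltnW nk) // TmS //.
  over.
rewrite count_iotaS.
case: (boolP (P n)) => hP /=.
  by rewrite int_max // ?bigmax_ge0' // addn1.
rewrite addn0 int_const //.
rewrite divr_ge0 // subr_ge0 exprn_ile1 // ?pf_le1 // pf_ge0 ?(ltW l0) //.
exact: bigmax_ge0'.
Qed.

Lemma stage_final {R : realType} (lam : R) (k i : nat) (P : nat -> bool) :
  0 < lam -> (i < k)%N -> P i ->
  expo_expect lam k (Fc k i P) = (((count P (iota 0 k))%:R : R)^-1)%:E.
Proof.
move=> l0 ik Pi.
have := @stage2 R lam k i P l0 ik Pi k ik (leqnn k) (fun _ => 0).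
rewrite (_ : (fun g => Fc k i P (mrg k g (fun _ => 0))) = Fc k i P); last first.
  apply/funext => g; rewrite /Fc /condf (@eq_in_all _ _ (fun j => P j ==> cmpf i j (g j) (g i))) //.
  move=> j; rewrite mem_iota add0n => /andP[_ jk].
  by rewrite /mrg jk ik.
move=> ->; rewrite /Tm subnn big_nil pf0 expr0n.
have c0 := @count_pos P i k Pi ik.
by rewrite eqn0Ngt c0 /= subr0 div1r.
Qed.

Lemma card_count k (p : nat -> bool) : #|[set j : 'I_k | p (val j)]%SET| = count p (iota 0 k).
Proof. by rewrite cardsE cardE /enum_mem size_filter -enumT -val_enum_ord count_map. Qed.

Lemma forall_iota k (Q : nat -> bool) : [forall j : 'I_k, Q (nat_of_ord j)] = all Q (iota 0 k).
Proof.
apply/forallP/allP => [h j | h j].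
  rewrite mem_iota add0n => /andP[_ jk].
  exact: (h (Ordinal jk)).
by apply: h; rewrite mem_iota add0n ltn_ord.
Qed.

Theorem lemma2 (R : realType) (Data Out : Type) (nbr : Data -> Data -> Prop)
  (D : Data) (k : nat) (omega : 'I_k -> Out) (q : Data -> Out -> R)
  (Delta eps qs : R) :
  (0 < k)%N -> 0 < Delta -> has_sensitivity nbr q Delta -> 0 < eps ->
  is_max_quality (fun i => q D (omega i)) qs ->
  forall i : 'I_k,
    algA_prob (eps / (2 * Delta)) (fun j => q D (omega j)) qs i =
    algB_prob (eps / (2 * Delta)) (fun j => q D (omega j)) qs i.
Proof.
move=> k0 D0 _ e0 _ i.
have l0 : 0 < eps / (2 * Delta) by rewrite divr_gt0 // mulr_gt0.
move: (eps / (2 * Delta)) l0 => lam l0.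
rewrite /algA_prob /algB_prob; congr (expo_expect _ _ _); apply/funext => X /=.
pose P := fun n : nat => if (insub n : option 'I_k) is Some j
  then (qs <= q D (omega j) + X n) else false.
have Pv : forall j : 'I_k, P (nat_of_ord j) = (qs <= q D (omega j) + X (nat_of_ord j)).
  by move=> j; rewrite /P (valK j).
rewrite (_ : (fun Z : nat -> R => _) = (fun Z => if P i then Fc k i P Z else 0%E)); last first.
  apply/funext => Z /=.
  rewrite eq_minl -Pv; case: (boolP (P i)) => Pi //=.
  have hi : Num.min qs (q D (omega i) + X i) = qs by apply: min_l; rewrite -Pv.
  rewrite /Fc /condf -forall_iota.
  congr (if _ then _ else _); apply: eq_forallb => j.
  rewrite eq_minl -Pv; case: (boolP (P j)) => Pj //=.
  rewrite min_l -?Pv // hi ltrD2l (inj_eq (addrI qs)).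
  by [].
rewrite (_ : [set j | qs <= q D (omega j) + X (\val j)]%SET = [set j : 'I_k | P (val j)]%SET); last first.
  by apply/setP => j; rewrite !inE Pv.
rewrite inE card_count.
case: (boolP (P i)) => Pi.
  by rewrite (@stage_final R lam k i P l0 (ltn_ord i) Pi).
exact: (esym (expo_zero lam k)).
Qed.
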